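(* If $d$ and $e$ are degree sequences with the same sum and $d\succeq e$, then $\Delta^*(d)\le\Delta^*(e)$.
   Context: Degree sequences (of finite simple graphs, terms may be $0$) are listed in nonincreasing order; sequences of different lengths are compared after padding with zeros. $m(d)=\max\{i : d_i\ge i-1\}$. For integers $k\ge 0$, $\Delta_k(d)=k(k-1)+\sum_{i>k}\min\{k,d_i\}-\sum_{i\le k}d_i$, and $\Delta^*(d)=\max\{\Delta_k(d):1\le k\le m(d)\}$. Majorization (dominance order): for degree sequences $d,e$ with the same sum, $d\succeq e$ means $\sum_{i\le k}d_i\ge\sum_{i\le k}e_i$ for all $k$. *)

(* Defs.v *)
From mathcomp Require Import all_boot all_order all_algebra.
Set Implicit Arguments. Unset Strict Implicit. Unset Printing Implicit Defensive.
Import Order.TTheory GRing.Theory Num.Theory.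

(* Sequences d : seq nat; d_i (1-indexed) is nth 0 d (i-1), so the sequence is
   implicitly padded with zeros. *)

Definition graphic (d : seq nat) : Prop :=
  exists adj : rel 'I_(size d),
    [/\ symmetric adj, irreflexive adj &
        forall i : 'I_(size d), #|[pred j | adj i j]| = nth 0 d i].

Definition degree_sequence (d : seq nat) : Prop :=
  sorted geq d /\ graphic d.

(* m(d) = max { i >= 1 : d_i >= i - 1 }  (1-indexed; with zero padding only
   indices i <= max(size d, 1) can qualify).  Index i (0-based) <-> i.+1. *)
Definition mdeg (d : seq nat) : nat :=
  \max_(0 <= i < maxn (size d) 1 | i <= nth 0 d i) i.+1.

Definition Delta (d : seq nat) (k : nat) : int :=
  ((k * (k - 1))%:Z + (\sum_(k <= i < size d) minn k (nth 0 d i))%:Z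
    - (\sum_(0 <= i < k) nth 0 d i)%:Z)%R.

(* Delta^*(d) = max { Delta_k(d) : 1 <= k <= m(d) }  (nonempty since m(d) >= 1). *)
Definition Delta_star (d : seq nat) : int :=
  \big[Num.max/Delta d 1]_(1 <= k < (mdeg d).+1) Delta d k.

Definition majorizes (d e : seq nat) : Prop :=
  sumn d = sumn e /\
  forall k, \sum_(0 <= i < k) nth 0 e i <= \sum_(0 <= i < k) nth 0 d i.

(* Main.v *)
Require Import Defs.
From mathcomp Require Import all_boot all_order all_algebra.
From mathcomp Require Import zify.
Import Order.TTheory GRing.Theory Num.Theory.

Definition Pf (s : seq nat) k := \sum_(0 <= i < k) nth 0 s i.
Definition Tf (s : seq nat) k := \sum_(k <= i < size s) minn k (nth 0 s i).

Lemma P_split s i j : i <= j -> Pf s j = Pf s i + \sum_(i <= l < j) nth 0 s l.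
Proof. by move=> hij; rewrite /Pf (@big_cat_nat _ _ _ i) //. Qed.

Lemma P_sumn s N : size s <= N -> Pf s N = sumn s.
Proof.
move=> hN; rewrite (@P_split s _ _ hN).
rewrite [X in _ + X]big1_seq ?addn0; last first.
  by move=> i /andP[_]; rewrite mem_index_iota => /andP[h _]; rewrite nth_default.
rewrite /Pf big_mkord.
elim: s {hN} => [|x s IH]; first by rewrite big_ord0.
by rewrite /= big_ord_recl /= IH.
Qed.

Lemma T_ext s k N : size s <= N ->
  Tf s k = \sum_(k <= i < N) minn k (nth 0 s i).
Proof.
move=> hN; rewrite /Tf.
case: (leqP k (size s)) => hk.
  rewrite (@big_cat_nat _ _ _ (size s) k N) // /= [X in _ = _ + X]big1_seq ?addn0 //.
  by move=> i /andP[_]; rewrite mem_index_iota => /andP[h _]; rewrite nth_default // minn0.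
rewrite big_geq ?(ltnW hk) // big1_seq //.
move=> i /andP[_]; rewrite mem_index_iota => /andP[h _]; rewrite nth_default ?minn0 //.
exact: leq_trans (ltnW hk) h.
Qed.

Lemma T_upper s k j : k <= j ->
  Tf s k + Pf s j <= k * (j - k) + sumn s.
Proof.
move=> hkj; set N := maxn (size s) j.
have hsN : size s <= N by rewrite leq_maxl.
have hjN : j <= N by rewrite leq_maxr.
rewrite (@T_ext s k N hsN) -(@P_sumn s N hsN) (@P_split s _ _ hjN).
rewrite (@big_cat_nat _ _ _ j k N) // /=.
have h1 : \sum_(k <= i < j) minn k (nth 0 s i) <= k * (j - k).
  have -> : k * (j - k) = \sum_(k <= i < j) k by rewrite sum_nat_const_nat mulnC.
  by apply: leq_sum => i _; rewrite geq_minl.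
have h2 : \sum_(j <= i < N) minn k (nth 0 s i) <= \sum_(j <= i < N) nth 0 s i.
  by apply: leq_sum => i _; rewrite geq_minr.
lia.
Qed.

Lemma sorted_nth s i j : sorted geq s -> i <= j -> nth 0 s j <= nth 0 s i.
Proof.
move=> hs hij.
case: (ltnP j (size s)) => hj; last by rewrite nth_default.
have hi : i < size s by exact: leq_ltn_trans hij hj.
have := @sorted_leq_nth _ geq _ _ 0 s hs i j.
apply => //.
- by move=> y x z /= h1 h2; exact: leq_trans h2 h1.
- by move=> x /=.
Qed.

Lemma T_exact s k j : k <= j ->
  (forall i, k <= i -> i < j -> k <= nth 0 s i) ->
  (forall i, j <= i -> nth 0 s i <= k) ->
  Tf s k + Pf s j = k * (j - k) + sumn s.
Proof.
move=> hkj h1 h2; set N := maxn (size s) j.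
have hsN : size s <= N by rewrite leq_maxl.
have hjN : j <= N by rewrite leq_maxr.
rewrite (@T_ext s k N hsN) -(@P_sumn s N hsN) (@P_split s _ _ hjN).
rewrite (@big_cat_nat _ _ _ j k N) //=.
have -> : \sum_(k <= i < j) minn k (nth 0 s i) = k * (j - k).
  have -> : k * (j - k) = \sum_(k <= i < j) k by rewrite sum_nat_const_nat mulnC.
  apply: eq_big_nat => i /andP[hi1 hi2].
  by apply/minn_idPl; apply: h1.
have -> : \sum_(j <= i < N) minn k (nth 0 s i) = \sum_(j <= i < N) nth 0 s i.
  apply: eq_big_nat => i /andP[hi1 hi2].
  by apply/minn_idPr; apply: h2.
lia.
Qed.

Lemma T_lower s k : sorted geq s -> 0 < k ->
  exists2 j, k <= j & Tf s k + Pf s j = k * (j - k) + sumn s.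
Proof.
move=> hs hk.
have exP : exists n, (k <= n) && (nth 0 s n < k).
  exists (maxn k (size s)); rewrite leq_maxl /= nth_default //.
  by rewrite leq_maxr.
case: (ex_minnP exP) => j /andP[hkj hjk] hmin.
exists j => //; apply: T_exact => //.
- move=> i hki hij; rewrite leqNgt; apply/negP => hlt.
  by have := hmin i; rewrite hki hlt => /(_ isT); rewrite leqNgt hij.
- move=> i hji; apply: ltnW; exact: leq_ltn_trans (@sorted_nth s j i hs hji) hjk.
Qed.

Lemma mdeg_ge1 s : 0 < mdeg s.
Proof.
rewrite /mdeg; apply: (@bigmaxn_sup_seq _ _ 0) => //.
by rewrite mem_index_iota /= leq_maxr.
Qed.


Lemma mdeg_witness s k : 0 < k -> k <= mdeg s ->
  exists i, i <= nth 0 s i /\ k <= i.+1.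
Proof.
move=> hk hkm.
case: (boolP [exists i : 'I_(maxn (size s) 1), (i <= nth 0 s i) && (k <= i.+1)]).
  by case/existsP => i /andP[h1 h2]; exists i.
move/existsPn => hno; exfalso.
have : mdeg s <= k.-1.
  apply/bigmax_leqP_seq => i; rewrite mem_index_iota => /andP[_ hi] hP.
  have := hno (Ordinal hi); rewrite /= hP /= -ltnNge.
  by case: (k) hk.
clear hno; move=> h; lia.
Qed.

Lemma mdeg_above s : nth 0 s (mdeg s) < mdeg s.
Proof.
case: (ltnP (mdeg s) (maxn (size s) 1)) => h.
  rewrite ltnNge; apply/negP => hP.
  have : (mdeg s).+1 <= mdeg s.
    by rewrite /mdeg; apply: (@leq_bigmax_seq _ _ (fun i => i <= nth 0 s i) (fun i => i.+1)) => //;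
       rewrite mem_index_iota /= h.
  by rewrite ltnn.
rewrite nth_default ?mdeg_ge1 //.
exact: leq_trans (leq_maxl _ _) h.
Qed.

Lemma DeltaE s k :
  Delta s k = (((k * (k - 1))%:Z + (Tf s k)%:Z - (Pf s k)%:Z))%R.
Proof. by []. Qed.

Lemma le_star s k : 0 < k -> k <= mdeg s -> (Delta s k <= Delta_star s)%R.
Proof.
move=> h1 h2; rewrite /Delta_star.
apply: (@le_bigmax_seq _ _ _ _ _ k) => //.
by rewrite mem_index_iota h1 ltnS.
Qed.

Lemma star_le s (B : int) :
  (forall k, 0 < k -> k <= mdeg s -> (Delta s k <= B)%R) ->
  (Delta_star s <= B)%R.
Proof.
move=> hB; rewrite /Delta_star big_seq.
apply: bigmax_le; first by apply: hB => //; exact: mdeg_ge1.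
by move=> k; rewrite mem_index_iota ltnS => /andP[h1 h2]; apply: hB.
Qed.

Lemma arith k M : 0 < M -> M < k -> k * (k - 1) <= M * (M - 1) + 2 * ((k - M) * (k - 1)).
Proof.
move=> hM hMk.
have [t ->] : exists t, k = M + t.+1 by exists (k - M).-1; lia.
case: M hM {hMk} => // M _.
have -> : M.+1 + t.+1 - 1 = M + t.+1 by lia.
have -> : M.+1 + t.+1 - M.+1 = t.+1 by lia.
have -> : M.+1 - 1 = M by lia.
nia.
Qed.

Theorem theorem17 (d e : seq nat) :
  degree_sequence d -> degree_sequence e ->
  majorizes d e ->
  (Delta_star d <= Delta_star e)%R.
Proof.
move=> [sd _] [se _] [hsum hmaj].
have hmajP : forall k, Pf e k <= Pf d k by move=> k; exact: hmaj.
apply: star_le => k hk hkd.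
set M := mdeg e.
have hM : 0 < M by exact: mdeg_ge1.
case: (leqP k M) => hkM.
  apply: (le_trans _ (@le_star e k hk hkM)).
  rewrite !DeltaE.
  have [j hkj hj] := @T_lower e k se hk.
  have hu := @T_upper d k j hkj.
  have h1 := hmajP j; have h2 := hmajP k.
  move: hj hu; generalize (k * (j - k)) => c hj hu.
  lia.
apply: (le_trans _ (@le_star e M hM (leqnn M))).
rewrite !DeltaE.
have hTe : Tf e M + Pf e M = M * (M - M) + sumn e.
  apply: T_exact => //; first by move=> i h1 h2; lia.
  move=> i hi; apply: ltnW; exact: leq_ltn_trans (@sorted_nth e M i se hi) (mdeg_above e).
have hTd := @T_upper d k k (leqnn k).
have [i0 [hi0 hki0]] := @mdeg_witness d k hk hkd.
have hPd : Pf d M + (k - M) * (k - 1) <= Pf d k.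
  rewrite (@P_split d M k (ltnW hkM)) leq_add2l.
  have -> : (k - M) * (k - 1) = \sum_(M <= l < k) (k - 1) by rewrite sum_nat_const_nat mulnC.
  rewrite big_nat_cond [X in _ <= X]big_nat_cond.
  apply: leq_sum => l /andP[/andP[_ hl] _].
  have hli0 : l <= i0 by lia.
  have := @sorted_nth d l i0 sd hli0; lia.
have h1 := hmajP M.
have ha := @arith k M hM hkM.
rewrite subnn muln0 in hTe hTd.
move: ha hPd; generalize (k * (k - 1)) (M * (M - 1)) ((k - M) * (k - 1)) => a b c ha hPd.
lia.
Qed.
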